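(* Let $(T,X)$ be a thickly stable flow, where $T$ is an abelian Hausdorff topological group and $X$ a Hausdorff uniform space. If $x\in X$ is an a.p. point, then the subflow $(T,\overline{Tx})$ is an a.p. flow even when $T$ is regarded as a discrete group (i.e. for every $\varepsilon\in\mathscr U_X$ there is a set $A\subseteq T$ and a finite set $F\subseteq T$ with $FA=T$ such that $Ay\subseteq\varepsilon[y]$ for all $y\in\overline{Tx}$), and moreover $(T,\overline{Tx})$ is equicontinuous.
   Context: $\mathscr U_X$ is a compatible symmetric uniformity of $X$; for $\varepsilon\in\mathscr U_X$ and $A\subseteq X$, $\varepsilon[A]=\{y:\exists a\in A,\ (a,y)\in\varepsilon\}$. A set $S\subseteq T$ is (right) thick if for every compact $K\subseteq T$ there is $t\in T$ with $Kt\subseteq S$; $A\subseteq T$ is (right) syndetic if there is a compact $K\subseteq T$ with $Kt\cap A\neq\emptyset$ for all $t\in T$. A point $x$ is almost periodic (a.p.) if $\{t: tx\in U\}$ is syndetic for every neighborhood $U$ of $x$. A flow $(T,X)$ is thickly stable if for every $\varepsilon\in\mathscr U_X$ and every $x\in X$ there exist $\delta\in\mathscr U_X$ and a thick $S\subseteq T$ such that $s(\delta[x])\subseteq\varepsilon[sx]$ for all $s\in S$. A flow is an a.p. flow if for every $\alpha\in\mathscr U_X$ there is a syndetic $A\subseteq T$ with $Ax\subseteq\alpha[x]$ for all $x\in X$. A flow $(T,Z)$ is equicontinuous if for every $\varepsilon\in\mathscr U$ and $z\in Z$ there is $\delta$ with $t(\delta[z])\subseteq\varepsilon[tz]$ for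 all $t\in T$. *)

(* Defs.v *)
From HB Require Import structures.
From mathcomp Require Import all_boot all_order all_algebra.
From mathcomp Require Import all_classical all_reals all_analysis.
Set Implicit Arguments. Unset Strict Implicit. Unset Printing Implicit Defensive.
Import Order.TTheory GRing.Theory Num.Theory.
Local Open Scope classical_set_scope.
Local Open Scope ring_scope.

(* An abelian Hausdorff topological group T is a [topologicalZmodType]
   (written additively: the product "Kt" of the paper is [K + t]). *)

Definition sym_entourage (X : uniformType) (e : set (X * X)) : Prop :=
  entourage e /\ (forall x y, e (x, y) -> e (y, x)).

Definition ent_img (X : uniformType) (e : set (X * X)) (A : set X) : set X :=
  [set y | exists2 a, A a & e (a, y)].

Definition is_flow (T : topologicalZmodType) (X : uniformType)
    (act : T -> X -> X) : Prop :=
  (forall x, act 0 x = x) /\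
  (forall s t x, act (s + t) x = act s (act t x)) /\
  continuous (fun p : T * X => act p.1 p.2).

Definition thick (T : topologicalZmodType) (S : set T) : Prop :=
  forall K : set T, compact K -> exists t : T, forall k, K k -> S (k + t).

Definition syndetic (T : topologicalZmodType) (A : set T) : Prop :=
  exists K : set T, compact K /\ forall t : T, exists2 k, K k & A (k + t).

Definition ap_point (T : topologicalZmodType) (X : uniformType)
    (act : T -> X -> X) (x : X) : Prop :=
  forall U : set X, nbhs x U -> syndetic [set t | U (act t x)].

Definition thickly_stable (T : topologicalZmodType) (X : uniformType)
    (act : T -> X -> X) : Prop :=
  forall (eps : set (X * X)) (x : X), sym_entourage eps ->
    exists delta : set (X * X), sym_entourage delta /\
      exists S : set T, thick S /\
        forall s, S s -> act s @` ent_img delta [set x] `<=` ent_img eps [set act s x].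

Definition orbit_closure (T : topologicalZmodType) (X : uniformType)
    (act : T -> X -> X) (x : X) : set X :=
  closure (range (fun t : T => act t x)).

Definition discrete_ap_subflow (T : topologicalZmodType) (X : uniformType)
    (act : T -> X -> X) (Y : set X) : Prop :=
  forall eps : set (X * X), sym_entourage eps ->
    exists A F : set T, finite_set F /\
      (forall t : T, exists f, exists a, [/\ F f, A a & t = f + a]) /\
      (forall y, Y y -> act^~ y @` A `<=` ent_img eps [set y]).

Definition equicontinuous_subflow (T : topologicalZmodType) (X : uniformType)
    (act : T -> X -> X) (Y : set X) : Prop :=
  forall (eps : set (X * X)) (z : X), sym_entourage eps -> Y z ->
    exists delta : set (X * X), sym_entourage delta /\
      forall t : T, act t @` (ent_img delta [set z] `&` Y)
                    `<=` ent_img eps [set act t z].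

(* Main.v *)
Require Import Defs.
From HB Require Import structures.
From mathcomp Require Import all_boot all_order all_algebra.
From mathcomp Require Import all_classical all_reals all_analysis.
From mathcomp Require Import finmap.
Import GRing.Theory.
Local Open Scope classical_set_scope.

Lemma sym_split {X : uniformType} {eps : set (X * X)} :
  sym_entourage eps -> exists e, sym_entourage e /\
    forall a b c, e (a, b) -> e (b, c) -> eps (a, c).
Proof.
move=> [he _].
have [B hB hBB] := entourage_split_ex he.
exists (B `&` B^-1%relation); split.
  split; first exact: entourage_invI.
  by move=> x y [h1 h2]; split.
move=> a b c [h1 _] [h2 _]; apply: hBB; by exists b.
Qed.

Lemma sym_refl {X : uniformType} {e : set (X * X)} x : sym_entourage e -> e (x, x).
Proof. by move=> [he _]; apply: entourage_refl. Qed.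

Lemma ent_nbhs {X : uniformType} {e : set (X * X)} x :
  sym_entourage e -> nbhs x [set y | e (x, y)].
Proof.
move=> [he _]; apply: filterS (nbhs_entourage x he) => y /=.
by rewrite /xsection /= in_setE.
Qed.

Lemma act_nbhs {T : topologicalZmodType} {X : uniformType} {act : T -> X -> X}
  {t z} {U : set X} : is_flow act -> nbhs (act t z) U -> nbhs z (act t @^-1` U).
Proof.
move=> [_ [_ hc]] hU.
have := hc (t, z) U hU => /= -[[A B] /= [At Bz] AB].
apply: filterS Bz => w Bw; apply: (AB (t, w)); split => //.
exact: nbhs_singleton At.
Qed.

Lemma act_nbhs_x {T : topologicalZmodType} {X : uniformType} {act : T -> X -> X}
  {k0 k x} {U : set X} : is_flow act -> nbhs (act (k0 - k)%R x) U ->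
  nbhs k [set k' | U (act (k0 - k')%R x)].
Proof.
move=> [_ [_ hc]] hU.
have := hc ((k0 - k)%R, x) U hU => /= -[[A B] /= [Ak Bx] AB].
have := @sub_continuous T (k0, k) A Ak => /= -[[C D] /= [Ck Dk] CD].
apply: filterS Dk => k' Dk'; apply: (AB ((k0 - k')%R, x)); split => /=.
  by apply: (CD (k0, k')); split => //; exact: nbhs_singleton Ck.
exact: nbhs_singleton Bx.
Qed.

Lemma act_ent_nbhs {T : topologicalZmodType} {X : uniformType} {act : T -> X -> X}
  {e : set (X * X)} t z : is_flow act -> sym_entourage e ->
  nbhs z [set w | e (act t z, act t w)].
Proof.
move=> hf he; apply: (act_nbhs (U := [set v | e (act t z, v)]) hf).
exact: ent_nbhs.
Qed.

Lemma act_ent_nbhs2 {T : topologicalZmodType} {X : uniformType} {act : T -> X -> X}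
  {e : set (X * X)} t p z : is_flow act -> sym_entourage e ->
  nbhs z [set w | e (act t (act p z), act t (act p w))].
Proof.
move=> hf he; apply: (act_nbhs (U := [set v | e (act t (act p z), act t v)]) hf).
exact: (act_ent_nbhs t (act p z) hf he).
Qed.

Lemma closure_pick {T : topologicalZmodType} {X : uniformType} {act : T -> X -> X}
  {x z} {B : set X} : orbit_closure act x z -> nbhs z B -> exists t, B (act t x).
Proof.
move=> hz hB; have [w [[t _ <-] Bw]] := hz B hB; by exists t.
Qed.

Lemma actE {T : topologicalZmodType} {X : uniformType} {act : T -> X -> X} {a b w} :
  is_flow act -> act a (act b w) = act (a + b)%R w.
Proof. by move=> [_ [h _]]; rewrite h. Qed.

Lemma synd_thick {T : topologicalZmodType} {N S : set T} t :
  syndetic N -> thick S -> exists n, N n /\ S (n + t)%R.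
Proof.
move=> [K [hK hN]] hS.
have [t0 ht0] := hS K hK.
have [k Kk Nk] := hN (t0 - t)%R.
exists (k + (t0 - t))%R; split => //.
by rewrite addrA subrK; apply: ht0.
Qed.

Lemma equi {T : topologicalZmodType} {X : uniformType} {act : T -> X -> X} x :
  is_flow act -> thickly_stable act -> ap_point act x ->
  equicontinuous_subflow act (orbit_closure act x).
Proof.
move=> hf hts hap eps z heps hz.
have [e1 [he1 c1]] := sym_split heps.
have [e2 [he2 c2]] := sym_split he1.
have [e [he c]] := sym_split he2.
have [delta [hdelta [S [hS hSd]]]] := hts e z he.
have [d' [hd' cd]] := sym_split hdelta.
exists d'; split => //.
move=> t _ [y [[a /= -> hzy] hy] <-].
exists (act t z) => //.
have Bz : nbhs z ([set w | e (act t z, act t w)] `&` [set w | d' (z, w)]).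
  apply: filterI; last exact: ent_nbhs.
  exact: (act_ent_nbhs _ _ hf he).
have [p [hp1 hp2]] := closure_pick hz Bz.
have By : nbhs y ([set w | e (act t y, act t w)] `&` [set w | d' (y, w)]).
  apply: filterI; last exact: ent_nbhs.
  exact: (act_ent_nbhs _ _ hf he).
have [q [hq1 hq2]] := closure_pick hy By.
have hpd : delta (z, act p x) by apply: cd (sym_refl z hd') hp2.
have hqd : delta (z, act q x) by apply: cd hzy hq2.
pose V := [set w | e (act t (act p x), act t (act p w)) /\ e (act t (act q x), act t (act q w))].
have hV : nbhs x V.
  by apply: filterI; exact: (act_ent_nbhs2 _ _ _ hf he).
have [n [[Vn1 Vn2] Sn]] := synd_thick t (hap V hV) hS.
have E1 : forall r, act t (act r (act n x)) = act (n + t)%R (act r x).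
  move=> r; rewrite !(actE hf); congr (act _ x).
  by rewrite addrC addrA.
have hSp : e (act (n + t)%R z, act (n + t)%R (act p x)).
  suff [b /= ->] : ent_img e [set act (n + t)%R z] (act (n + t)%R (act p x)) by [].
  by apply: hSd => //; exists (act p x) => //; exists z.
have hSq : e (act (n + t)%R z, act (n + t)%R (act q x)).
  suff [b /= ->] : ent_img e [set act (n + t)%R z] (act (n + t)%R (act q x)) by [].
  by apply: hSd => //; exists (act q x) => //; exists z.
rewrite !E1 in Vn1 Vn2.
have s1 := c _ _ _ hp1 Vn1.
have s2 := c _ _ _ (he.2 _ _ hSp) hSq.
have s3 := c _ _ _ (he.2 _ _ Vn2) (he.2 _ _ hq1).
have w1 := c2 _ _ _ s1 s2.
have w2 : e1 (act (n + t)%R (act q x), act t y).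
  by apply: c2 s3; apply: c; apply: sym_refl.
exact: c1 w1 w2.
Qed.

Definition pT (T : topologicalZmodType) : Type := T.
HB.instance Definition _ (T : topologicalZmodType) := Topological.on (pT T).
HB.instance Definition _ (T : topologicalZmodType) := isPointed.Build (pT T) (0%R : T).
Lemma cc {T : topologicalZmodType} {K : set T} : compact K -> cover_compact K.
Proof.
move=> hK.
have hK' : @compact (pT T) K by [].
rewrite compact_cover in hK'.
exact: hK'.
Qed.

Lemma orb_in {T : topologicalZmodType} {X : uniformType} {act : T -> X -> X} x s :
  orbit_closure act x (act s x).
Proof. by apply: subset_closure; exists s. Qed.

Lemma disc {T : topologicalZmodType} {X : uniformType} {act : T -> X -> X} x :
  is_flow act -> thickly_stable act -> ap_point act x ->
  discrete_ap_subflow act (orbit_closure act x).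
Proof.
move=> hf hts hap eps heps.
have hequi := equi x hf hts hap.
have hx0 : act 0%R x = x by case: hf.
have xY : orbit_closure act x x by rewrite -{2}hx0; apply: orb_in.
have [e [he c]] := sym_split heps.
have [e' [he' c']] := sym_split he.
have [d1 [hd1 hd1eq]] := hequi e' x he' xY.
pose A := [set a | d1 (x, act a x)].
have Agood : forall y a, orbit_closure act x y -> A a -> eps (y, act a y).
  move=> y a hy ha.
  have By : nbhs y ([set w | e' (y, w)] `&` [set w | e' (act a y, act a w)]).
    apply: filterI; first exact: ent_nbhs.
    exact: (act_ent_nbhs _ _ hf he').
  have [t [ht1 ht2]] := closure_pick hy By.
  have h3 : ent_img e' [set act t x] (act t (act a x)).
    apply: hd1eq; exists (act a x) => //; split; last exact: orb_in.
    by exists x.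
  have [b /= hb h4] := h3; subst b.
  have E : act t (act a x) = act a (act t x).
    by rewrite !(actE hf) addrC.
  rewrite E in h4.
  apply: c (c' _ _ _ ht1 h4) _.
  by apply: c' (he'.2 _ _ ht2) (sym_refl _ he').
have [e2 [he2 c2]] := sym_split hd1.
have [g [hg hgeq]] := hequi e2 x he2 xY.
have [K [hKc hK]] := hap _ (ent_nbhs x hg).
have {}hKc := cc hKc.
pose fk := fun k0 => interior [set k | e2 (x, act (k0 - k)%R x)].
have cov : K `<=` cover K fk.
  move=> k Kk; exists k => //.
  apply: (act_nbhs_x (U := [set v | e2 (x, v)]) hf).
  by rewrite subrr hx0; apply: ent_nbhs.
have [D' D'K KD] := hKc T K fk (fun _ _ => @open_interior _ _) cov.
exists A, ((fun k0 : T => (- k0)%R) @` [set` D']); split.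
  by apply: finite_image; apply: finite_fset.
split.
  move=> t; have [k Kk hk] := hK t.
  have [k0 Dk0 hk0] := KD k Kk.
  have hk0' : e2 (x, act (k0 - k)%R x) := nbhs_singleton hk0.
  exists (- k0)%R, (t + k0)%R; split.
  - by exists k0.
  - have h5 : ent_img e2 [set act (k0 - k)%R x] (act (k0 - k)%R (act (k + t)%R x)).
      apply: hgeq; exists (act (k + t)%R x) => //; split; last exact: orb_in.
      by exists x.
    have [b /= hb h6] := h5; subst b.
    rewrite (actE hf) addrA subrK addrC in h6.
    exact: c2 hk0' h6.
  - by rewrite addrCA addNr addr0.
move=> y hy _ [a ha <-].
by exists y => //; apply: Agood.
Qed.

Theorem theorem2p5 (T : topologicalZmodType) (X : uniformType)
    (act : T -> X -> X) (x : X) :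
  hausdorff_space T -> hausdorff_space X ->
  is_flow act -> thickly_stable act -> ap_point act x ->
  discrete_ap_subflow act (orbit_closure act x) /\
  equicontinuous_subflow act (orbit_closure act x).
Proof.
move=> _ _ hf hts hap; split; [exact: disc | exact: equi].
Qed.
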